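(* Let $\Gamma\subset\mathbf{Z}^n$ be an almost periodic pattern, $\varepsilon>0$ and $\ell\in\mathbf{N}^*$. Set $\varepsilon'=\varepsilon/\ell$ and let $R_{\varepsilon'}>0$ and a relatively dense set $\mathcal N_{\varepsilon'}$ be such that $D_R^+((\Gamma+v)\Delta\Gamma)<\varepsilon'$ for all $R\ge R_{\varepsilon'}$ and all $v\in\mathcal N_{\varepsilon'}$. Then for every $k\in\{1,\dots,\ell\}$ and every $v_1,\dots,v_k\in\mathcal N_{\varepsilon'}$, $\forall R\ge R_{\varepsilon'},\quad D_R^+\Big(\big(\Gamma+\sum_{i=1}^k v_i\big)\Delta\Gamma\Big)<\varepsilon.$
   Context: Balls are for the sup norm: $B(x,R)=\{y:\max_i|x_i-y_i|<R\}$. Relatively dense: there is $R_0>0$ such that every ball of radius at least $R_0$ meets the set; uniformly discrete: there is $r>0$ such that every ball of radius at most $r$ contains at most one point; Delone: both. $D_R^+(\Gamma)=\sup_{x\in\mathbf{R}^n}\frac{\operatorname{Card}(B(x,R)\cap\Gamma)}{\operatorname{Card}(B(x,R)\cap\mathbf{Z}^n)}$. A Delone set $\Gamma\subset\mathbf{Z}^n$ is an almost periodic pattern if for every $\varepsilon>0$ there exist $R_\varepsilon>0$ and a relatively dense set $\mathcal N_\varepsilon$ with $D_R^+((\Gamma+v)\Delta\Gamma)<\varepsilon$ for all $R\ge R_\varepsilon$, $v\in\mathcal N_\varepsilon$. *)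

(* Defs.v *)
From HB Require Import structures.
From mathcomp Require Import all_boot all_order all_algebra.
From mathcomp Require Import finmap all_classical all_reals.
Set Implicit Arguments. Unset Strict Implicit. Unset Printing Implicit Defensive.
Import Order.TTheory GRing.Theory Num.Theory.
Local Open Scope classical_set_scope.
Local Open Scope ring_scope.

Definition inball (R : realType) (n : nat) (x : 'rV[R]_n) (r : R)
  : set 'rV[int]_n :=
  [set y | forall i : 'I_n, `|x ord0 i - (y ord0 i)%:~R| < r].

Definition cnt (R : realType) (n : nat) (A : set 'rV[int]_n) : R :=
  (#|` fset_set A|)%fset%:R.

Definition Dplus (R : realType) (n : nat) (r : R) (G : set 'rV[int]_n) : R :=
  sup [set cnt R (inball x r `&` G) / cnt R (inball x r) | x in [set: 'rV[R]_n]].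

Definition translate (n : nat) (G : set 'rV[int]_n) (v : 'rV[int]_n)
  : set 'rV[int]_n := [set y + v | y in G].

Definition symdiff (T : Type) (A B : set T) : set T := (A `\` B) `|` (B `\` A).

Definition rel_dense (R : realType) (n : nat) (S : set 'rV[int]_n) : Prop :=
  exists R0 : R, 0 < R0 /\
    forall (x : 'rV[R]_n) (r : R), R0 <= r -> exists y, S y /\ inball x r y.

Definition unif_discrete (R : realType) (n : nat) (S : set 'rV[int]_n) : Prop :=
  exists r0 : R, 0 < r0 /\
    forall (x : 'rV[R]_n) (r : R), r <= r0 ->
      forall y z, S y -> S z -> inball x r y -> inball x r z -> y = z.

Definition delone (R : realType) (n : nat) (S : set 'rV[int]_n) : Prop :=
  rel_dense R S /\ unif_discrete R S.

Definition almost_periodic (R : realType) (n : nat) (G : set 'rV[int]_n) : Prop :=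
  delone R G /\
  forall eps : R, 0 < eps ->
    exists (Re : R) (N : set 'rV[int]_n), 0 < Re /\ rel_dense R N /\
      forall r : R, Re <= r -> forall v, N v ->
        Dplus r (symdiff (translate G v) G) < eps.

(* Main.v *)
Require Import Defs.
From HB Require Import structures.
From mathcomp Require Import all_boot all_order all_algebra.
From mathcomp Require Import finmap all_classical all_reals.
Import Order.TTheory GRing.Theory Num.Theory.
Local Open Scope classical_set_scope.
Local Open Scope ring_scope.
Set Implicit Arguments. Unset Strict Implicit.

Section S.
Variables (R : realType) (n : nat).
Implicit Types (A B : set 'rV[int]_n) (r : R) (x : 'rV[R]_n).

Lemma fset_set_inf (T : choiceType) (A : set T) : ~ finite_set A -> fset_set A = fset0.
Proof. by move=> h; rewrite /fset_set; case: pselect. Qed.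

Lemma cnt_inf A : ~ finite_set A -> cnt R A = 0.
Proof. by move=> h; rewrite /cnt fset_set_inf. Qed.

Lemma cnt_ge0 A : 0 <= cnt R A. Proof. by rewrite /cnt ler0n. Qed.

Lemma cnt_sub A B : A `<=` B -> finite_set B -> cnt R A <= cnt R B.
Proof.
move=> AB fB; have fA := sub_finite_set AB fB.
by rewrite /cnt ler_nat; apply: fsubset_leq_card; rewrite -fset_set_sub.
Qed.

Lemma cnt_U A B : finite_set (A `|` B) -> cnt R (A `|` B) <= cnt R A + cnt R B.
Proof.
rewrite finite_setU => -[fA fB].
by rewrite /cnt fset_setU // -natrD ler_nat cardfsU leq_subr.
Qed.

Lemma cnt_img (f g : 'rV[int]_n -> 'rV[int]_n) A : cancel f g -> cnt R (f @` A) = cnt R A.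
Proof.
move=> fK; have finj : injective f := can_inj fK.
have gfA : g @` (f @` A) = A.
  rewrite image_comp; have -> : g \o f = id by apply: funext => x /=; rewrite fK.
  by rewrite image_id.
have [fA|nfA] := pselect (finite_set A).
  by rewrite /cnt fset_set_image // card_imfset.
rewrite !cnt_inf //; move=> ffA; apply: nfA; rewrite -gfA; exact: finite_image.
Qed.
Definition ratio (x : 'rV[R]_n) (r : R) A :=
  cnt R (inball x r `&` A) / cnt R (inball x r).

Lemma ratio_ge0 x r A : 0 <= ratio x r A.
Proof. by rewrite /ratio divr_ge0 // cnt_ge0. Qed.

Lemma ratio_case x r A (P : R -> Prop) :
  (finite_set (inball x r) -> P (ratio x r A)) -> P 0 -> P (ratio x r A).
Proof.
move=> h0 h1; have [f|nf] := pselect (finite_set (inball x r)); first exact: h0.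
by rewrite /ratio (cnt_inf nf) invr0 mulr0.
Qed.

Lemma ratio_le1 x r A : ratio x r A <= 1.
Proof.
rewrite /ratio; have [f|nf] := pselect (finite_set (inball x r)); last first.
  by rewrite (cnt_inf nf) invr0 mulr0.
have h : cnt R (inball x r `&` A) <= cnt R (inball x r) by apply: cnt_sub.
have [->|nz] := eqVneq (cnt R (inball x r)) 0; first by rewrite invr0 mulr0.
rewrite ler_pdivrMr ?mul1r //; by rewrite lt0r nz cnt_ge0.
Qed.

Lemma ratio_mono x r A B : A `<=` B -> ratio x r A <= ratio x r B.
Proof.
move=> AB; rewrite /ratio.
have [f|nf] := pselect (finite_set (inball x r)); last first.
  by rewrite (cnt_inf nf) invr0 !mulr0.
apply: ler_wpM2r; first by rewrite invr_ge0 cnt_ge0.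
apply: cnt_sub; first by move=> y [? ?]; split => //; apply: AB.
by apply: sub_finite_set f => y [].
Qed.

Lemma ratio_U x r A B : ratio x r (A `|` B) <= ratio x r A + ratio x r B.
Proof.
rewrite /ratio.
have [f|nf] := pselect (finite_set (inball x r)); last first.
  by rewrite (cnt_inf nf) invr0 !mulr0 addr0.
rewrite -mulrDl; apply: ler_wpM2r; first by rewrite invr_ge0 cnt_ge0.
rewrite setIUr; apply: cnt_U; by apply: sub_finite_set f => y [] [].

Qed.

Lemma Dplus_E r A : Dplus r A = sup [set ratio x r A | x in [set: 'rV[R]_n]].
Proof. by []. Qed.

Lemma Dset_sup r A : has_sup [set ratio x r A | x in [set: 'rV[R]_n]].
Proof.
split; first by exists (ratio 0 r A), 0.
by exists 1 => y [x _ <-]; apply: ratio_le1.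
Qed.

Lemma Dplus_ge x r A : ratio x r A <= Dplus r A.
Proof. by rewrite Dplus_E; apply: (sup_upper_bound (Dset_sup r A)); exists x. Qed.

Lemma Dplus_mono r A B : A `<=` B -> Dplus r A <= Dplus r B.
Proof.
move=> AB; rewrite [X in X <= _]Dplus_E; apply: ge_sup; first by exists (ratio 0 r A), 0.
move=> y [x _ <-]; apply: le_trans (ratio_mono x r AB) (Dplus_ge x r B).
Qed.

Lemma Dplus_U r A B : Dplus r (A `|` B) <= Dplus r A + Dplus r B.
Proof.
rewrite [X in X <= _]Dplus_E; apply: ge_sup; first by exists (ratio 0 r (A `|` B)), 0.
move=> y [x _ <-]; apply: le_trans (ratio_U x r A B) _.
by apply: lerD; apply: Dplus_ge.
Qed.

Lemma translateE A a y : translate A a y <-> A (y - a).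
Proof.
split; first by move=> [z Az <-]; rewrite addrK.
by move=> h; exists (y - a) => //; rewrite subrK.
Qed.

Definition realv (a : 'rV[int]_n) : 'rV[R]_n := map_mx (fun z : int => z%:~R) a.

Lemma inball_tr x r A a :
  inball x r `&` translate A a = (fun y => y + a) @` (inball (x - realv a) r `&` A).
Proof.
apply/seteqP; split.
  move=> y [hb /translateE hA]; exists (y - a); last by rewrite subrK.
  split => // i; have := hb i; rewrite /realv !mxE intrB.
  by rewrite opprB addrA subrK.
move=> _ [y [hb hA] <-]; split; last by apply/translateE; rewrite addrK.
move=> i; have := hb i; rewrite /realv !mxE intrD.
by rewrite opprD addrA addrAC.
Qed.

Lemma ratio_tr x r A a : ratio x r (translate A a) = ratio (x - realv a) r A.
Proof.
have K : cancel (fun y : 'rV[int]_n => y + a) (fun y => y - a) by move=> y; rewrite addrK.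
rewrite /ratio inball_tr (cnt_img _ K).
rewrite -[inball x r](setIT) -[[set: _]](_ : translate setT a = setT).
  by rewrite inball_tr (cnt_img _ K) setIT.
by apply/seteqP; split => // y _; apply/translateE.
Qed.

Lemma Dplus_tr r A a : Dplus r (translate A a) <= Dplus r A.
Proof.
rewrite [X in X <= _]Dplus_E; apply: ge_sup; first by exists (ratio 0 r (translate A a)), 0.
by move=> y [x _ <-]; rewrite ratio_tr; apply: Dplus_ge.
Qed.

Lemma sym_decomp (G : set 'rV[int]_n) a b :
  symdiff (translate G (a + b)) G `<=`
  translate (symdiff (translate G a) G) b `|` symdiff (translate G b) G.
Proof.
move=> y; rewrite /symdiff.
have E1 : translate G (a + b) y <-> translate G a (y - b).
  by rewrite !translateE opprD addrA addrAC.
move=> [] [h1 h2].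
  have [hb|hb] := pselect (translate G b y); first by right; left.
  left; apply/translateE; left; split; first exact/E1.
  by move=> hG; apply: hb; apply/translateE.
have [hb|hb] := pselect (translate G b y).
  left; apply/translateE; right; split; first by apply/translateE.
  by move=> h; apply: h2; apply/E1.
by right; right.
Qed.
End S.
Lemma main_ind (R : realType) (n : nat) (G : set 'rV[int]_n) (N : set 'rV[int]_n) (r c : R) :
  (forall v, N v -> Dplus r (symdiff (translate G v) G) < c) ->
  forall m (w : 'I_m.+1 -> 'rV[int]_n), (forall i, N (w i)) ->
  Dplus r (symdiff (translate G (\sum_(i < m.+1) w i)) G) < m.+1%:R * c.
Proof.
move=> hN; elim=> [|m IH] w hw.
  by rewrite big_ord1 mul1r; apply: hN.
rewrite big_ord_recr /=.
apply: le_lt_trans (Dplus_mono _ (@sym_decomp _ _ _ _)) _.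
apply: le_lt_trans (Dplus_U _ _ _) _.
rewrite [X in _ < X](_ : _ = m.+1%:R * c + c); last by rewrite -addn1 natrD mulrDl mul1r.
apply: le_lt_trans (lerD (Dplus_tr _ _ _) (lexx _)) _.
apply: ltrD; [exact: IH | exact: hN].
Qed.

Theorem lemmaA1 (R : realType) (n : nat) (G : set 'rV[int]_n) :
  almost_periodic R G ->
  forall (eps : R) (l : nat), 0 < eps -> (0 < l)%N ->
  forall (Re : R) (N : set 'rV[int]_n),
    0 < Re -> rel_dense R N ->
    (forall r : R, Re <= r -> forall v, N v ->
        Dplus r (symdiff (translate G v) G) < eps / l%:R) ->
  forall (k : nat), (1 <= k <= l)%N ->
  forall v : 'I_k -> 'rV[int]_n, (forall i, N (v i)) ->
  forall r : R, Re <= r ->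
    Dplus r (symdiff (translate G (\sum_(i < k) v i)) G) < eps.
Proof.
move=> _ eps l he hl Re N _ _ hN [//|m] /andP[_ hkl] v hv r hr.
apply: lt_le_trans (@main_ind _ _ _ _ _ _ (hN r hr) m v hv) _.
have l0 : (l%:R : R) != 0 by rewrite pnatr_eq0 -lt0n.
rewrite mulrA ler_pdivrMr ?ltr0n // mulrC; apply: ler_wpM2l; [exact: ltW | by rewrite ler_nat].
Qed.
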